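(* Let $\widehat{\mathbf M}=(\hat{\mathbb X},\hat{\mathbb U},\mathbb Y,\hat x_0,\hat{\mathbf t},\hat h)$ and $\mathbf M=(\mathbb X,\mathbb U,\mathbb Y,x_0,\mathbf t,h)$ be gMDPs with $\widehat{\mathbf M}\preceq^\delta_\epsilon\mathbf M$ via relation $\mathcal R$, interface $\mathcal U_v$ and lifted kernel $\mathbb W_{\mathbf t}$, let $\psi$ be an scLTL formula with DFA $\mathcal A_\psi=(Q,q_0,\Sigma,F,\tau)$, and let $\mu:\hat{\mathbb X}\times Q\to\hat{\mathbb U}$ be a mapping. Let $V:\hat{\mathbb X}\times Q\to[0,1]$ and $V_{\|}:\hat{\mathbb X}\times\mathbb X\times Q\to[0,1]$ satisfy $V(\hat x,q)\le V_{\|}(\hat x,x,q)$ for all $(\hat x,x)\in\mathcal R$ and $q\in Q$. Then $$\mathbf T^\mu_{\epsilon,\delta}(V)(\hat x,q)\le\mathbf T^\mu(V_{\|})(\hat x,x,q)\qquad\forall(\hat x,x)\in\mathcal R,\ q\in Q,$$ where $\mathbf T^\mu_{\epsilon,\delta}$ is the $(\epsilon,\delta)$-robust operator with respect to $\widehat{\mathbf M}$ and $\mathbf T^\mu$ is the Bellman operator with respect to $(\widehat{\mathbf M}\|_{\mathcal R}\mathbf M)\otimes\mathcal A_\psi$.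
   Context: A gMDP is $(\mathbb X,\mathbb U,\mathbb Y,x_0,\mathbf t,h)$ with Polish state/input spaces, output space $\mathbb Y$ with metric $\mathbf d_{\mathbb Y}$, initial state, stochastic kernel $\mathbf t(\cdot\mid x,u)$ and measurable output map $h$. $\widehat{\mathbf M}\preceq^\delta_\epsilon\mathbf M$ means there exist an interface $\mathcal U_v:\hat{\mathbb U}\times\hat{\mathbb X}\times\mathbb X\to\mathcal P(\mathbb U)$, a measurable relation $\mathcal R\subseteq\hat{\mathbb X}\times\mathbb X$ and a Borel kernel $\mathbb W_{\mathbf t}(\cdot\mid\hat u,\hat x,x)$ on $\hat{\mathbb X}\times\mathbb X$ with $(\hat x_0,x_0)\in\mathcal R$ and, for all $(\hat x,x)\in\mathcal R$: $\mathbf d_{\mathbb Y}(\hat h(\hat x),h(x))\le\epsilon$, and for all $\hat u$, $\mathbb W=\mathbb W_{\mathbf t}(\cdot\mid\hat u,\hat x,x)$ has marginals $\hat{\mathbf t}(\cdot\mid\hat x,\hat u)$ on $\hat{\mathbb X}$ and $\mathbf t(\cdot\mid x,\mathcal U_v(\hat u,\hat x,x))$ on $\mathbb X$, and $\mathbb W(\mathcal R)\ge1-\delta$. The coupling gMDP $\widehat{\mathbf M}\|_{\mathcal R}\mathbf M$ has state space $\hat{\mathbb X}\times\mathbb X$, input space $\hat{\mathbb U}$, initial state $(\hat x_0,x_0)$, kernel $\mathbb W_{\mathbf t}$ and output map $(\hat x,x)\mapsto h(x)$. $\Sigma=2^{\mathsf{AP}}$, $\mathsf L:\mathbb Y\to\Sigma$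 measurable labelling, $\mathcal A_\psi$ a DFA (accepting set $F$, transition $\tau:Q\times\Sigma\to Q$) for $\psi$. The product $(\widehat{\mathbf M}\|_{\mathcal R}\mathbf M)\otimes\mathcal A_\psi$ has states $\hat{\mathbb X}\times\mathbb X\times Q$ and kernel $\mathbf 1_{\{q'\}}(\tau(q,\mathsf L(h(x'))))\,\mathbb W_{\mathbf t}(d\hat x'\times dx'\mid\hat u,\hat x,x)$; its Bellman operator is $\mathbf T^\mu(V_{\|})(\hat x,x,q)=\int\max\{\mathbf 1_F(q'),V_{\|}(\hat x',x',q')\}$ against this kernel with $\hat u=\mu(\hat x,q)$. With $\mathcal N_\epsilon(y)=\{y'\in\mathbb Y:\mathbf d_{\mathbb Y}(y',y)\le\epsilon\}$ and $\bar\tau(q,\hat x')=\{\tau(q,\alpha):\alpha\in\mathsf L(\mathcal N_\epsilon(\hat h(\hat x')))\}$, the $(\epsilon,\delta)$-robust operator is $\mathbf T^\mu_{\epsilon,\delta}(V)(\hat x,q)=\mathbf L\big(\int_{\hat{\mathbb X}}\min_{q'\in\bar\tau(q,\hat x')}\max\{\mathbf 1_F(q'),V(\hat x',q')\}\,\hat{\mathbf t}(d\hat x'\mid\hat x,\mu(\hat x,q))-\delta\big)$ with $\mathbf L(r)=\min(1,\max(0,r))$. *)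

(* Defs.v *)
From HB Require Import structures.
From mathcomp Require Import all_boot all_order all_algebra.
From mathcomp Require Import all_classical all_reals.
From mathcomp Require Import ereal topology normedtype sequences measure
  lebesgue_measure lebesgue_integral probability kernel.

Set Implicit Arguments.
Unset Strict Implicit.
Unset Printing Implicit Defensive.
Import Order.TTheory GRing.Theory Num.Theory.
Local Open Scope classical_set_scope.
Local Open Scope ring_scope.
Local Open Scope ereal_scope.

Definition is_metric (R : realType) (Y : Type) (dY : Y -> Y -> R) : Prop :=
  [/\ forall y y', (0 <= dY y y')%R,
      forall y y', dY y y' = 0%R <-> y = y',
      forall y y', dY y y' = dY y' y &
      forall y y' y'', (dY y y'' <= dY y y' + dY y' y'')%R].

Definition clamp01 (R : realType) (r : \bar R) : \bar R :=
  mine 1%E (maxe 0%E r).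

(* The kernel t(. | x, U_v(uh, xh, x)): the input distribution U_v
   integrated against the kernel t. *)
Definition mixed_kernel (R : realType) d dU (X : measurableType d)
    (U : measurableType dU) (t : R.-pker (X * U)%type ~> X)
    (nu : probability U R) (x : X) (B : set X) : \bar R :=
  \int[nu]_u t (x, u) B.

Definition approx_sim (R : realType)
    (dXh dUh dX dU dY : measure_display)
    (Xh : measurableType dXh) (Uh : measurableType dUh)
    (X : measurableType dX) (U : measurableType dU) (Y : measurableType dY)
    (dist : Y -> Y -> R) (eps delta : R)
    (xh0 : Xh) (that : R.-pker (Xh * Uh)%type ~> Xh) (hhat : Xh -> Y)
    (x0 : X) (t : R.-pker (X * U)%type ~> X) (h : X -> Y)
    (Uv : Uh -> Xh -> X -> probability U R)
    (Rel : set (Xh * X)%type)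
    (W : R.-pker (Uh * Xh * X)%type ~> (Xh * X)%type) : Prop :=
  [/\ measurable Rel,
      Rel (xh0, x0) &
      forall xh x, Rel (xh, x) ->
        (dist (hhat xh) (h x) <= eps)%R /\
        forall uh : Uh,
          [/\ forall A, measurable A ->
                W (uh, xh, x) (A `*` setT) = that (xh, uh) A,
              forall B, measurable B ->
                W (uh, xh, x) (setT `*` B) = mixed_kernel t (Uv uh xh x) x B &
              W (uh, xh, x) Rel >= (1 - delta)%:E]].

Definition tau_bar (R : realType) (Y : Type) (dist : Y -> Y -> R) (eps : R)
    (AP Q : finType) (tau : Q -> {set AP} -> Q) (Lab : Y -> {set AP})
    (q : Q) (yh : Y) : {set Q} :=
  [set q' : Q | `[< exists y : Y, (dist y yh <= eps)%R /\ q' = tau q (Lab y) >]].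

Definition robust_op (R : realType) (dXh dUh : measure_display)
    (Xh : measurableType dXh) (Uh : measurableType dUh) (Y : Type)
    (dist : Y -> Y -> R) (eps delta : R)
    (that : R.-pker (Xh * Uh)%type ~> Xh) (hhat : Xh -> Y)
    (AP Q : finType) (F : {set Q}) (tau : Q -> {set AP} -> Q)
    (Lab : Y -> {set AP}) (mu : Xh -> Q -> Uh)
    (V : Xh -> Q -> R) (xh : Xh) (q : Q) : \bar R :=
  clamp01 ((\int[that (xh, mu xh q)]_xh'
     (\big[Num.min/1%R]_(q' in tau_bar dist eps tau Lab q (hhat xh'))
        Num.max (if q' \in F then 1%R else 0%R) (V xh' q'))%:E) - delta%:E).

(* Bellman operator of the product (Mhat ||_Rel M) (x) A_psi, whose kernel is
   1_{q'}(tau(q, L(h x'))) W(dxh' x dx' | mu(xh,q), xh, x); integrating out the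
   Dirac component in Q gives: *)
Definition bellman_op (R : realType) (dXh dUh dX : measure_display)
    (Xh : measurableType dXh) (Uh : measurableType dUh)
    (X : measurableType dX) (Y : Type)
    (h : X -> Y) (W : R.-pker (Uh * Xh * X)%type ~> (Xh * X)%type)
    (AP Q : finType) (F : {set Q}) (tau : Q -> {set AP} -> Q)
    (Lab : Y -> {set AP}) (mu : Xh -> Q -> Uh)
    (Vp : Xh -> X -> Q -> R) (xh : Xh) (x : X) (q : Q) : \bar R :=
  \int[W (mu xh q, xh, x)]_z
     (let q' := tau q (Lab (h z.2)) in
      Num.max (if q' \in F then 1%R else 0%R) (Vp z.1 z.2 q'))%:E.

(* Main.v *)
Require Import Defs.
From HB Require Import structures.
From mathcomp Require Import all_boot all_order all_algebra.
From mathcomp Require Import all_classical all_reals.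
From mathcomp Require Import ereal topology normedtype sequences measure
  lebesgue_measure lebesgue_integral probability kernel.
From mathcomp Require Import measurable_realfun numfun.
Import Order.TTheory GRing.Theory Num.Theory.
Local Open Scope classical_set_scope.
Local Open Scope ring_scope.

Section helpers.
Local Open Scope ereal_scope.
Import HBNNSimple.

Lemma key (R : realType) d1 d2 (A : measurableType d1) (B : measurableType d2)
  (P : {measure set A -> \bar R}) (W : {measure set (A * B)%type -> \bar R})
  (Rel : set (A * B)%type) (f : A -> R) (g : A * B -> R) :
  measurable Rel ->
  (forall S, measurable S -> W (S `*` setT) = P S) ->
  (forall a, 0 <= f a <= 1)%R -> (forall z, 0 <= g z)%R ->
  (forall z, Rel z -> f z.1 <= g z)%R ->
  \int[P]_a (f a)%:E <= \int[W]_z (g z)%:E + W (~` Rel).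
Proof.
move=> mRel marg f01 g0 fg.
rewrite ge0_integralTE; last by move=> a; rewrite lee_fin; case/andP: (f01 a).
apply: ge_ereal_sup => _ [s /= hs <-].
rewrite -integralT_nnsfun.
have mfst : measurable_fun setT (@fst A B) by exact: measurable_fst.
have -> : \int[P]_x (s x)%:E = \int[pushforward W fst]_x (s x)%:E.
  apply: eq_measure_integral => S mS _.
  rewrite /pushforward -marg //.
  rewrite (_ : S `*` setT = fst @^-1` S) //.
  by apply/seteqP; split=> -[a b] /=; [case|move=> ?; split].
rewrite ge0_integral_pushforward //; last first.
- by move=> y _; rewrite lee_fin numfun.fun_ge0.
- by apply/measurable_EFinP; exact: measurable_funP.
rewrite preimage_setT.
have mRelC : measurable (~` Rel) by exact: measurableC.
have ms1 : measurable_fun setT (fun z : A * B => (s z.1)%R).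
  apply: measurableT_comp => //; exact: measurable_funP.
have mh1 : measurable_fun setT (fun z : A * B => ((s z.1 * \1_Rel z)%R)%:E).
  apply/measurable_EFinP; apply: measurable_funM => //; exact: measurable_indic.
have mh2 : measurable_fun setT (fun z : A * B => (\1_(~` Rel) z : R)%:E).
  apply/measurable_EFinP; exact: measurable_indic.
apply: (@le_trans _ _ (\int[W]_z (((s z.1 * \1_Rel z)%R)%:E + (\1_(~` Rel) z : R)%:E))).
  apply: ge0_le_integral => //.
  - by move=> z _; rewrite lee_fin numfun.fun_ge0.
  - by apply: measurableT_comp => //; apply/measurable_EFinP; exact: measurable_funP.
  - apply: emeasurable_funD => //.
  - move=> z _ /=; rewrite /numfun.indic /=.
    have s1 : (s z.1 <= 1)%R.
      by apply: le_trans (_ : f z.1 <= 1)%R; [rewrite -lee_fin|case/andP: (f01 z.1)].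
    case: (boolP (z \in Rel)) => hz; rewrite in_setC hz /=.
      by rewrite mulr1 adde0.
    by rewrite mulr0 add0e lee_fin.
have h10 : forall z, setT z -> 0 <= ((s z.1 * \1_Rel z)%R)%:E.
  by move=> z _; rewrite lee_fin mulr_ge0 // numfun.fun_ge0.
have h20 : forall z, setT z -> 0 <= (\1_(~` Rel) z : R)%:E.
  by move=> z _; rewrite lee_fin.
rewrite (ge0_integralD W measurableT h10 mh1 h20 mh2).
rewrite integral_indic // setIT; apply: leeD2r.
rewrite ge0_integralTE; last by move=> z; rewrite lee_fin mulr_ge0 // numfun.fun_ge0.
rewrite ge0_integralTE; last by move=> z; rewrite lee_fin.
apply: ge_ereal_sup => _ [t /= ht <-].
apply: ereal_sup_ubound; exists t => //= z.
apply: le_trans (ht z) _; rewrite lee_fin.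
rewrite /numfun.indic; case: (boolP (z \in Rel)) => hz /=; last by rewrite mulr0.
rewrite mulr1; apply: le_trans (fg z _); last by move: hz; rewrite inE.
by rewrite -lee_fin.
Qed.

Lemma bigmin_le_elt (R : realDomainType) (I : eqType) (s : seq I) (P : pred I)
  (F : I -> R) (x : I) :
  x \in s -> P x -> (\big[Num.min/1%R]_(i <- s | P i) F i <= F x)%R.
Proof.
elim: s => // y s IH; rewrite in_cons big_cons => /orP[/eqP<-|xs] Px.
  by rewrite Px ge_min lexx.
by case: ifP => _; [rewrite ge_min IH ?orbT | exact: IH].
Qed.

Lemma bigmin_01 (R : realDomainType) (I : Type) (s : seq I) (P : pred I)
  (F : I -> R) :
  (forall i, P i -> 0 <= F i <= 1)%R ->
  (0 <= \big[Num.min/1%R]_(i <- s | P i) F i <= 1)%R.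
Proof.
move=> H; apply: (big_ind (fun v => 0 <= v <= 1)%R) => //.
  by rewrite ler01 lexx.
move=> a b /andP[a0 a1] /andP[b0 b1].
by rewrite le_min a0 b0 ge_min a1.
Qed.

Lemma compl_le (R : realType) d (T : measurableType d)
  (m : {measure set T -> \bar R}) (A : set T) (dl : R) :
  m setT = 1 -> measurable A -> (1 - dl)%:E <= m A -> m (~` A) <= dl%:E.
Proof.
move=> mT mA mAge.
have fin : m setT < +oo by rewrite mT ltry.
have -> : m (~` A) = m setT - m A.
  rewrite -setTD; transitivity (m setT - m (setT `&` A)).
    exact: measureD measurableT mA fin.
  by rewrite setTI.
rewrite mT.
apply: le_trans (leeB (lexx 1%E) mAge) _.
by rewrite -EFinB opprB addrC subrK.
Qed.

End helpers.

Theorem lemma3 (R : realType) (dXh dUh dX dU dY : measure_display)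
    (Xh : measurableType dXh) (Uh : measurableType dUh)
    (X : measurableType dX) (U : measurableType dU) (Y : measurableType dY)
    (dist : Y -> Y -> R) (eps delta : R)
    (xh0 : Xh) (that : R.-pker (Xh * Uh)%type ~> Xh) (hhat : Xh -> Y)
    (x0 : X) (t : R.-pker (X * U)%type ~> X) (h : X -> Y)
    (Uv : Uh -> Xh -> X -> probability U R)
    (Rel : set (Xh * X)%type) (W : R.-pker (Uh * Xh * X)%type ~> (Xh * X)%type)
    (AP Q : finType) (q0 : Q) (F : {set Q}) (tau : Q -> {set AP} -> Q)
    (Lab : Y -> {set AP})
    (mu : Xh -> Q -> Uh) (V : Xh -> Q -> R) (Vp : Xh -> X -> Q -> R) :
  is_metric dist ->
  0 <= eps -> 0 <= delta <= 1 ->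
  measurable_fun setT hhat -> measurable_fun setT h ->
  (forall alpha : {set AP}, measurable (Lab @^-1` [set alpha])) ->
  approx_sim dist eps delta xh0 that hhat x0 t h Uv Rel W ->
  (forall xh q, 0 <= V xh q <= 1) ->
  (forall xh x q, 0 <= Vp xh x q <= 1) ->
  (forall xh x q, Rel (xh, x) -> V xh q <= Vp xh x q) ->
  forall xh x q, Rel (xh, x) ->
    (robust_op dist eps delta that hhat F tau Lab mu V xh q
     <= bellman_op h W F tau Lab mu Vp xh x q)%E.
Proof.
move=> met eps0 /andP[d0 d1] mhh mh mLab [mRel _ sim] V01 Vp01 VVp xh x q Rxh.
have [_ marg] := sim xh x Rxh.
have [margA _ WRel] := marg (mu xh q).
have [msym _] : [/\ forall y y', dist y y' = dist y' y & True].
  by case: met.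
set u := mu xh q.
pose f := fun xh' => \big[Num.min/1%R]_(q' in tau_bar dist eps tau Lab q (hhat xh'))
        Num.max (if q' \in F then 1%R else 0%R) (V xh' q').
pose g := fun z : Xh * X => let q' := tau q (Lab (h z.2)) in
      Num.max (if q' \in F then 1%R else 0%R) (Vp z.1 z.2 q').
have g0 : forall z, (0 <= g z)%R.
  move=> z; rewrite /g le_max; apply/orP; right; by case/andP: (Vp01 z.1 z.2 (tau q (Lab (h z.2)))).
have f01 : forall a, (0 <= f a <= 1)%R.
  move=> a; apply: bigmin_01 => i _.
  have /andP[v0 v1] := V01 a i.
  rewrite le_max v0 orbT ge_max v1 andbT.
  by case: ifP => _; rewrite ?lexx ?ler01.
have fg : forall z, Rel z -> (f z.1 <= g z)%R.
  case=> a b /= Rab.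
  have [dab _] := sim a b Rab.
  have mem : tau q (Lab (h b)) \in tau_bar dist eps tau Lab q (hhat a).
    rewrite /tau_bar inE; apply/asboolP; exists (h b); split => //.
    by rewrite msym.
  have := @bigmin_le_elt _ _ _ _ (fun q' => Num.max (if q' \in F then 1%R else 0%R) (V a q')) _ (mem_index_enum _) mem.
  move=> /le_trans; apply.
  rewrite /g /= ge_max le_max lexx /= le_max (VVp _ _ _ Rab) orbT.
  by [].
have kk := @key _ _ _ _ _ (that (xh, u)) (W (u, xh, x)) Rel f g mRel margA f01 g0 fg.
have WC : (W (u, xh, x) (~` Rel) <= delta%:E)%E.
  have WT : W (u, xh, x) setT = 1%E by exact: prob_kernel.
  have := @compl_le _ _ _ (W (u, xh, x)) Rel delta WT mRel WRel.
  by [].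
rewrite /robust_op /bellman_op /clamp01 -/u.
have Ig0 : (0 <= \int[W (u, xh, x)]_z (g z)%:E)%E.
  by apply: integral_ge0 => z _; rewrite lee_fin.
rewrite ge_min; apply/orP; right.
rewrite ge_max; apply/andP; split; first exact: Ig0.
rewrite leeBlDr //.
apply: le_trans kk _.
exact: leeD2l.
Qed.
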